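(* Let $b,\ell\ge1$, $s=2^b$, and let $G'$ be obtained from $G_{b,\ell}$ by deleting an arbitrary subset $R$ of the vertices $\{v_{\ell,\vec j}:\vec j\in[0,s-1]^\ell\}$ together with their incident edges. Let $\vec x,\vec z\in[0,s-1]^\ell$ with $z_k-x_k$ even for all $k$. Then whether $v_{\ell,(\vec x+\vec z)/2}\in R$ is determined by $\vec x$, $\vec z$ and the (possibly infinite) length of a shortest path between $v_{0,\vec x}$ and $v_{2\ell,\vec z}$ in $G'$; namely $v_{\ell,(\vec x+\vec z)/2}\notin R$ iff this distance equals $\mathrm{dist}_{G_{b,\ell}}(v_{0,\vec x},v_{2\ell,\vec z})$.
   Context: Notation $[a,b]=\{a,\dots,b\}$. Fix integers $b,\ell\ge1$, $s=2^b$, $A=3\ell s^2$. The weighted graph $H_{b,\ell}$ has vertex set $\bigcup_{i=0}^{2\ell}V_i$, $V_i=\{v_{i,\vec j}:\vec j\in[0,s-1]^\ell\}$; for $i\in[0,2\ell-1]$ let $c(i)=i+1$ if $i<\ell$, $c(i)=2\ell-i$ if $i\ge\ell$; $v_{i,\vec j}$ and $v_{i+1,\vec j'}$ are adjacent iff $j_k=j'_k$ for all $k\ne c(i)$, with weight $A+(j_{c(i)}-j'_{c(i)})^2$; no other edges. The unweighted graph $G_{b,\ell}$: each $v\in V_i$ is kept and gets attached (root adjacent to $v$) a complete binary tree $T^{\mathrm{in}}_v$ of depth $b$ (only if $i>0$) with leaves $v^{\mathrm{in}}_u$ for the neighbors $u\in V_{i-1}$, and a complete binary tree $T^{\mathrm{out}}_v$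 of depth $b$ (only if $i<2\ell$) with leaves $v^{\mathrm{out}}_u$ for the neighbors $u\in V_{i+1}$; all trees disjoint; for every edge $e=\{u,v\}$ of $H_{b,\ell}$, $u\in V_i$, $v\in V_{i+1}$, the leaves $u^{\mathrm{out}}_v$ and $v^{\mathrm{in}}_u$ are joined by a path of length $w(e)-2b-2$ through new vertices. *)

(* Defs.v *)
From mathcomp Require Import all_boot.
Set Implicit Arguments. Unset Strict Implicit. Unset Printing Implicit Defensive.

(* Conventions.  Index vectors j in [0,s-1]^l are sequences of length l;
   the paper's coordinate k in [1,l] is position k-1 of the sequence. *)

Definition sz (b : nat) : nat := 2 ^ b.
Definition Aw (b l : nat) : nat := 3 * l * (sz b) ^ 2.

(* c(i) - 1  (0-based coordinate changed between layers i and i+1) *)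
Definition cc (l i : nat) : nat := if i < l then i else (2 * l - i).-1.

Definition valid_idx (b l : nat) (j : seq nat) : Prop :=
  size j = l /\ forall k, k < l -> nth 0 j k < sz b.

(* weight of the H-edge from v_{i,j} to v_{i+1,j'} with j' = j[c(i) := t] *)
Definition wt (b l i : nat) (j : seq nat) (t : nat) : nat :=
  let a := nth 0 j (cc l i) in Aw b l + (maxn a t - minn a t) ^ 2.

Definition plen (b l i : nat) (j : seq nat) (t : nat) : nat := wt b l i j t - 2 * b - 2.

(* Vertices of G_{b,l}:
   VMain i j          = v_{i,j}
   VTree i j o d p    = node at depth d (root: d = 0), heap position p < 2^d,
                        of T^out_{v_{i,j}} (o = true) or T^in_{v_{i,j}} (o = false);
                        leaves are at depth b
   VPath i j t q      = q-th interior vertex of the path subdividing the edge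
                        {v_{i,j}, v_{i+1, j[c(i):=t]}} (counted from the out-leaf side) *)
Inductive vtx : Type :=
| VMain of nat & seq nat
| VTree of nat & seq nat & bool & nat & nat
| VPath of nat & seq nat & nat & nat.

(* Leaf labelling: [lab o i j t] is the (depth-b) leaf position, in the tree
   T^out (o = true) resp. T^in (o = false) of v_{i,j}, of the leaf associated
   with the neighbour of v_{i,j} whose c-coordinate is t.  The paper leaves this
   bijection unspecified; the theorem is stated for every such labelling. *)
Definition labelling := bool -> nat -> seq nat -> nat -> nat.

Definition good_lab (b : nat) (lab : labelling) : Prop :=
  forall o i j t t', t < sz b -> t' < sz b ->
    lab o i j t < sz b /\ (lab o i j t = lab o i j t' -> t = t').

(* q-th vertex (0 <= q <= plen) of the path from u^out_v to v^in_u,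
   u = v_{i,j}, v = v_{i+1, j[c(i):=t]} *)
Definition pathpt (b l : nat) (lab : labelling) (i : nat) (j : seq nat) (t q : nat) : vtx :=
  let j' := set_nth 0 j (cc l i) t in
  if q == 0 then VTree i j true b (lab true i j t)
  else if q == plen b l i j t then VTree i.+1 j' false b (lab false i.+1 j' (nth 0 j (cc l i)))
  else VPath i j t q.

Inductive arc (b l : nat) (lab : labelling) : vtx -> vtx -> Prop :=
| arc_root_out i j : i < 2 * l -> valid_idx b l j ->
    arc b l lab (VMain i j) (VTree i j true 0 0)
| arc_root_in i j : 0 < i -> i <= 2 * l -> valid_idx b l j ->
    arc b l lab (VMain i j) (VTree i j false 0 0)
| arc_tree i j (o : bool) d p c : valid_idx b l j ->
    (if o then i < 2 * l else (0 < i) && (i <= 2 * l)) ->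
    d < b -> p < 2 ^ d -> c < 2 ->
    arc b l lab (VTree i j o d p) (VTree i j o d.+1 (2 * p + c))
| arc_path i j t q : i < 2 * l -> valid_idx b l j -> t < sz b -> q < plen b l i j t ->
    arc b l lab (pathpt b l lab i j t q) (pathpt b l lab i j t q.+1).

Definition adjG (b l : nat) (lab : labelling) (u v : vtx) : Prop :=
  arc b l lab u v \/ arc b l lab v u.

Inductive walk (adj : vtx -> vtx -> Prop) (ok : vtx -> Prop) : nat -> vtx -> vtx -> Prop :=
| walk0 u : ok u -> walk adj ok 0 u u
| walkS n u w v : ok u -> adj u w -> walk adj ok n w v -> walk adj ok n.+1 u v.

Definition is_dist (adj : vtx -> vtx -> Prop) (ok : vtx -> Prop) (u v : vtx)
  (d : option nat) : Prop :=
  match d with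
  | Some n => walk adj ok n u v /\ forall m, m < n -> ~ walk adj ok m u v
  | None => forall n, ~ walk adj ok n u v
  end.

Definition kept (l : nat) (R : seq nat -> Prop) (v : vtx) : Prop :=
  ~ (exists j, v = VMain l j /\ R j).

Definition midpoint (l : nat) (x z : seq nat) : seq nat :=
  mkseq (fun k => (nth 0 x k + nth 0 z k)./2) l.

(* Main.v *)
From Stdlib Require Import ZArith Lia Classical.
Require Import Defs.
From mathcomp Require Import all_boot zify.

Open Scope Z_scope.

Fixpoint sumZ (n : nat) (f : nat -> Z) : Z :=
  match n with 0%nat => 0 | S n => sumZ n f + f n end.

Lemma sumZ_ext n f g : (forall k, (k < n)%N -> f k = g k) -> sumZ n f = sumZ n g.
Proof. elim: n => //= n IH H; rewrite IH ?H //; move=> k Hk; apply: H; lia. Qed.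

Lemma sumZ_sub n f g : sumZ n f - sumZ n g = sumZ n (fun k => f k - g k).
Proof. elim: n => //= n IH; lia. Qed.

Lemma sumZ_single n h c : (c < n)%N -> (forall k, (k < n)%N -> k <> c -> h k = 0) ->
  sumZ n h = h c.
Proof.
elim: n => //= n IH Hc H.
case: (ltnP c n) => Hcn.
- rewrite IH //; last by move=> k Hk Hkc; apply: H => //; lia.
  have -> : h n = 0 by apply: H => //; lia.
  lia.
- have -> : c = n by lia.
  suff -> : sumZ n h = 0 by lia.
  have : forall k, (k < n)%N -> h k = 0 by move=> k Hk; apply: H; lia.
  clear. elim: n => //= n IH H. rewrite IH; last by move=> k Hk; apply: H; lia.
  rewrite H; lia.
Qed.

Lemma sumZ_ge n h c : (forall k, (k < n)%N -> 0 <= h k) -> (c < n)%N -> h c <= sumZ n h.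
Proof.
elim: n => //= n IH H Hc.
have H0 : 0 <= sumZ n h.
  have : forall k, (k < n)%N -> 0 <= h k by move=> k Hk; apply: H; lia.
  clear. elim: n => //= n IH H. have := IH (fun k Hk => H k ltac:(lia)). have := H n ltac:(lia). lia.
case: (ltnP c n) => Hcn.
- have := IH (fun k Hk => H k ltac:(lia)) Hcn. have := H n ltac:(lia). lia.
- have -> : c = n by lia. lia.
Qed.

Lemma sumZ_nonneg n h : (forall k, (k < n)%N -> 0 <= h k) -> 0 <= sumZ n h.
Proof.
elim: n => //= n IH H. have := IH (fun k Hk => H k ltac:(lia)). have := H n ltac:(lia). lia.
Qed.

Definition phase (l i k : nat) : Z :=
  if (i <= k)%N then 0 else if (i < 2 * l - k)%N then 1 else 2.

Lemma cc_lt l i : (i < 2 * l)%N -> (cc l i < l)%N.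
Proof. rewrite /cc; case: ifP; lia. Qed.

Lemma phase_step l i k : (i < 2 * l)%N -> (k < l)%N ->
  phase l i.+1 k = phase l i k + (if k == cc l i then 1 else 0).
Proof.
move=> Hi Hk.
have Hc : cc l i = if (i < l)%N then i else (2 * l - i).-1 by [].
rewrite Hc /phase.
case: (ltnP i l) => Hil; repeat (let H := fresh "H" in case: ifP => H); lia.
Qed.

Definition phi (b l : nat) (lam : nat -> Z) (i : nat) (j : seq nat) : Z :=
  Z.of_nat i * Z.of_nat (Aw b l) +
  sumZ l (fun k => 2 * lam k * Z.of_nat (nth 0%N j k) - phase l i k * lam k ^ 2).

Definition clamp (q D : Z) := Z.max (- q) (Z.min q D).

Definition Phi (b l : nat) (lam : nat -> Z) (v : vtx) : Z :=
  match v with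
  | VMain i j => phi b l lam i j
  | VTree i j o d p => if o then phi b l lam i j + Z.of_nat d + 1
                       else phi b l lam i j - Z.of_nat d - 1
  | VPath i j t q => phi b l lam i j + Z.of_nat b + 1 +
      clamp (Z.of_nat q) (phi b l lam i.+1 (set_nth 0%N j (cc l i) t) - phi b l lam i j
                          - 2 * Z.of_nat b - 2)
  end.

Lemma phi_step b l lam i j t : (i < 2 * l)%N ->
  phi b l lam i.+1 (set_nth 0%N j (cc l i) t) - phi b l lam i j =
  Z.of_nat (Aw b l) + 2 * lam (cc l i) * (Z.of_nat t - Z.of_nat (nth 0%N j (cc l i)))
  - lam (cc l i) ^ 2.
Proof.
move=> Hi.
have Hc := cc_lt l i Hi.
rewrite /phi.
have E : forall a b c d : Z, (a + b) - (c + d) = (a - c) + (b - d) by move=> *; lia.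
have N1 : nth 0%N (set_nth 0%N j (cc l i) t) (cc l i) = t by rewrite nth_set_nth /= eqxx.
have P1 : phase l i.+1 (cc l i) = phase l i (cc l i) + 1 by rewrite phase_step // eqxx.
rewrite E sumZ_sub (@sumZ_single _ _ (cc l i)) //.
- rewrite N1 P1 Nat2Z.inj_succ. lia.
- move=> k Hk Hkc.
  have Hn : (k == cc l i) = false by apply/eqP.
  rewrite nth_set_nth /= phase_step // Hn. rewrite Z.add_0_r. lia.
Qed.

Lemma pow2_ge b : (b.+1 <= 2 ^ b)%N.
Proof. exact: ltn_expl. Qed.


Lemma absdiff u t : Z.of_nat (maxn u t - minn u t) = Z.abs (Z.of_nat t - Z.of_nat u).
Proof. lia. Qed.

Lemma sq_nat u t : Z.of_nat ((maxn u t - minn u t) ^ 2) =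
   (Z.of_nat t - Z.of_nat u) * (Z.of_nat t - Z.of_nat u).
Proof.
rewrite expnS expn1 Nat2Z.inj_mul absdiff -Z.abs_mul. apply Z.abs_eq. apply Z.square_nonneg.
Qed.

Lemma key_Z (A S l b s T lam : Z) :
  1 <= l -> b + 1 <= s -> A = 3 * l * S -> S = s * s -> Z.abs lam <= s -> 0 <= b ->
  Z.abs (A + 2 * lam * T - lam ^ 2 - 2 * b - 2) <= A + T * T - 2 * b - 2 /\
  2 * b + 2 <= A.
Proof.
move=> Hl Hs HA HS Hlam Hb.
have HS0 : 0 <= S by rewrite HS; nia.
have HA3 : 3 * S <= A by rewrite HA; nia.
have Hl2 : lam * lam <= S by rewrite HS; nia.
have Hss : b + 1 <= S by rewrite HS; nia.
have H1 : 0 <= T * T - 2 * (lam * T) + lam * lam.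
  have : 0 <= (T - lam) * (T - lam) by apply Z.square_nonneg. lia.
have H2 : 0 <= T * T + 2 * (lam * T) + lam * lam.
  have : 0 <= (T + lam) * (T + lam) by apply Z.square_nonneg. lia.
have -> : 2 * lam * T = 2 * (lam * T) by ring.
have -> : lam ^ 2 = lam * lam by ring.
split; [apply Z.abs_le; split|]; lia.
Qed.

Lemma key_ineq (A s l b u t : nat) (lam : Z) :
  (1 <= l)%N -> (b.+1 <= s)%N -> A = (3 * l * s ^ 2)%N -> (u < s)%N -> (t < s)%N ->
  Z.abs lam <= Z.of_nat s ->
  Z.abs (Z.of_nat A + 2 * lam * (Z.of_nat t - Z.of_nat u) - lam ^ 2 - 2 * Z.of_nat b - 2)
  <= Z.of_nat (A + (maxn u t - minn u t) ^ 2 - 2 * b - 2).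
Proof.
move=> Hl Hs HA Hu Ht Hlam.
have HA' : Z.of_nat A = 3 * Z.of_nat l * (Z.of_nat s * Z.of_nat s).
  rewrite HA expnS expn1 !Nat2Z.inj_mul. lia.
have [K1 K2] := @key_Z (Z.of_nat A) _ (Z.of_nat l) (Z.of_nat b) (Z.of_nat s)
   (Z.of_nat t - Z.of_nat u) lam ltac:(lia) ltac:(lia) HA' erefl Hlam ltac:(lia).
have K3 := sq_nat u t.
have Hge : (2 * b + 2 <= A)%N by lia.
rewrite Nat2Z.inj_sub; last by lia.
rewrite Nat2Z.inj_sub; last by lia.
rewrite Nat2Z.inj_add K3. lia.
Qed.

Lemma Phi_pathpt b l lab lam i j t q :
  (q <= plen b l i j t)%N ->
  Z.abs (phi b l lam i.+1 (set_nth 0%N j (cc l i) t) - phi b l lam i j - 2 * Z.of_nat b - 2)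
    <= Z.of_nat (plen b l i j t) ->
  Phi b l lam (pathpt b l lab i j t q) =
  phi b l lam i j + Z.of_nat b + 1 +
  clamp (Z.of_nat q) (phi b l lam i.+1 (set_nth 0%N j (cc l i) t) - phi b l lam i j
                          - 2 * Z.of_nat b - 2).
Proof.
move=> Hq HD. rewrite /pathpt.
case: eqP => Hq0.
- subst q. cbn [Phi]. rewrite /clamp. lia.
- case: eqP => HqP.
  + cbn [Phi]. rewrite /clamp HqP. lia.
  + by [].
Qed.

Lemma lam_bound_path b l lam i j t :
  (1 <= l)%N -> (i < 2 * l)%N -> valid_idx b l j -> (t < sz b)%N ->
  (forall k, (k < l)%N -> Z.abs (lam k) <= Z.of_nat (sz b)) ->
  Z.abs (phi b l lam i.+1 (set_nth 0%N j (cc l i) t) - phi b l lam i j - 2 * Z.of_nat b - 2)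
    <= Z.of_nat (plen b l i j t).
Proof.
move=> Hl Hi [Hsz Hv] Ht Hlam.
rewrite phi_step //.
have Hc := cc_lt l i Hi.
rewrite /plen /wt.
exact: (@key_ineq (Aw b l) (sz b) l b _ t _ Hl (pow2_ge b) erefl (Hv _ Hc) Ht (Hlam _ Hc)).
Qed.

Lemma Phi_lip b l lab lam u v :
  (1 <= l)%N ->
  (forall k, (k < l)%N -> Z.abs (lam k) <= Z.of_nat (sz b)) ->
  Defs.arc b l lab u v -> Z.abs (Phi b l lam u - Phi b l lam v) <= 1.
Proof.
move=> Hl Hlam; case.
- move=> i j _ _ /=. lia.
- move=> i j _ _ _ /=. lia.
- move=> i j o d p c _ _ _ _ _ /=. case: o; lia.
- move=> i j t q Hi Hv Ht Hq.
  have HD := @lam_bound_path b l lam i j t Hl Hi Hv Ht Hlam.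
  rewrite (@Phi_pathpt b l lab lam i j t q _ HD); last by lia.
  rewrite (@Phi_pathpt b l lab lam i j t q.+1 _ HD); last by lia.
  rewrite /clamp. lia.
Qed.

Lemma walk_lb (adj : vtx -> vtx -> Prop) ok (F : vtx -> Z) n u v :
  (forall a c, adj a c -> Z.abs (F a - F c) <= 1) ->
  walk adj ok n u v -> F v - F u <= Z.of_nat n.
Proof.
move=> HF; elim => [w _ | m a w c _ Haw _ IH] /=; first lia.
have := HF _ _ Haw. lia.
Qed.

Lemma walk_mono (adj : vtx -> vtx -> Prop) (ok ok' : vtx -> Prop) n u v :
  (forall a, ok a -> ok' a) -> walk adj ok n u v -> walk adj ok' n u v.
Proof.
move=> H; elim => [w Hw | m a w c Ha Haw _ IH]; [exact: walk0 (H _ Hw) | exact: walkS (H _ Ha) Haw IH].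
Qed.

Lemma walk_cat (adj : vtx -> vtx -> Prop) ok n1 n2 u w v :
  walk adj ok n1 u w -> walk adj ok n2 w v -> walk adj ok (n1 + n2) u v.
Proof.
elim => [a _ | m a c d Ha Hac _ IH] // H2.
rewrite addSn. exact: walkS Ha Hac (IH H2).
Qed.

Lemma walk_ok_l (adj : vtx -> vtx -> Prop) ok n u v : walk adj ok n u v -> ok u.
Proof. by case. Qed.

Definition side (l : nat) (v : vtx) : nat :=
  match v with
  | VMain i _ => if (i < l)%N then 0 else if i == l then 1 else 2
  | VTree i _ o _ _ => if (i < l)%N then 0 else if (i == l) && ~~ o then 0 else 2
  | VPath i _ _ _ => if (i < l)%N then 0 else 2
  end%N.

Lemma side_pathpt b l lab i j t q :
  side l (pathpt b l lab i j t q) = if (i < l)%N then 0%N else 2%N.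
Proof.
rewrite /pathpt; repeat (let H := fresh "H" in case: ifP => H /=). all: try lia. all: try (move: H1; rewrite ?andbF ?andbT; lia). 
Qed.

Lemma pathpt_main b l lab i j t q i' j' : pathpt b l lab i j t q <> VMain i' j'.
Proof. rewrite /pathpt. by case: ifP => _ //; case: ifP. Qed.

Lemma arc_side b l lab u v : Defs.arc b l lab u v ->
  side l u = side l v \/ side l u = 1%N \/ side l v = 1%N.
Proof.
case.
- move=> i j _ _ /=. repeat (let H := fresh "H" in case: ifP => H /=); lia.
- move=> i j _ _ _ /=. repeat (let H := fresh "H" in case: ifP => H /=); lia.
- by move=> *; left.
- by move=> *; left; rewrite !side_pathpt.
Qed.

Lemma arc_main_valid b l lab u i j :
  Defs.arc b l lab u (VMain i j) \/ Defs.arc b l lab (VMain i j) u -> valid_idx b l j.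
Proof.
case=> H; inversion H; subst => //; exfalso; by apply: pathpt_main; eauto.
Qed.

Lemma side1 l v : side l v = 1%N -> exists j, v = VMain l j.
Proof.
case: v => [i j|i j o d p|i j t q] /=.
- case: ifP => _ //. case: eqP => [->|] //; by exists j.
- case: ifP => _ //; by case: ifP.
- by case: ifP.
Qed.

Lemma walk_split b l lab ok n u v :
  walk (adjG b l lab) ok n u v -> side l u = 0%N -> side l v = 2%N ->
  exists j n1 n2, valid_idx b l j /\ (n1 + n2 = n)%N /\
    walk (adjG b l lab) ok n1 u (VMain l j) /\ walk (adjG b l lab) ok n2 (VMain l j) v.
Proof.
elim => [a _ | m a w c Ha Haw Hw IH] Hu Hv; first by rewrite Hu in Hv.
have Hs : side l a = side l w \/ side l a = 1%N \/ side l w = 1%N.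
  by case: Haw => H; have := @arc_side b l lab _ _ H; lia.
case: Hs => [Hs|[Hs|Hs]].
- move: Hu; rewrite Hs => Hu. have [j [n1 [n2 [Hj [Hn [W1 W2]]]]]] := IH Hu Hv.
  exists j, n1.+1, n2. split => //. split; first by rewrite addSn Hn.
  split => //. exact: walkS Ha Haw W1.
- by rewrite Hu in Hs.
- have [j Ej] := @side1 l w Hs. subst w.
  exists j, 1%N, m. split; first exact: (@arc_main_valid b l lab a l j Haw).
  split; first by rewrite add1n.
  split => //. apply: walkS Ha Haw _. apply: walk0. exact: walk_ok_l Hw.
Qed.

Definition nZ (j : seq nat) (k : nat) : Z := Z.of_nat (nth 0%N j k).

Definition Cost (l : nat) (x z j : seq nat) : Z :=
  sumZ l (fun k => (nZ j k - nZ x k) ^ 2 + (nZ z k - nZ j k) ^ 2).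

Lemma sumZ_add n f g : sumZ n f + sumZ n g = sumZ n (fun k => f k + g k).
Proof. elim: n => //= n IH; lia. Qed.

Lemma phi_half1 b l lam x j :
  phi b l lam l j - phi b l lam 0 x =
  Z.of_nat l * Z.of_nat (Aw b l) + sumZ l (fun k => 2 * lam k * (nZ j k - nZ x k) - lam k ^ 2).
Proof.
rewrite /phi.
have E : forall a b c d : Z, (a + b) - (c + d) = (a - c) + (b - d) by move=> *; lia.
rewrite E sumZ_sub. congr (_ + _); first lia.
apply: sumZ_ext => k Hk. rewrite /phase /nZ.
rewrite ?leq0n; repeat (let H := fresh "H" in case: ifP => H); try (exfalso; lia); ring.
Qed.

Lemma phi_half2 b l lam z j :
  phi b l lam (2 * l) z - phi b l lam l j =
  Z.of_nat l * Z.of_nat (Aw b l) + sumZ l (fun k => 2 * lam k * (nZ z k - nZ j k) - lam k ^ 2).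
Proof.
rewrite /phi.
have E : forall a b c d : Z, (a + b) - (c + d) = (a - c) + (b - d) by move=> *; lia.
rewrite E sumZ_sub. congr (_ + _); first lia.
apply: sumZ_ext => k Hk. rewrite /phase /nZ.
rewrite ?leq0n; repeat (let H := fresh "H" in case: ifP => H); try (exfalso; lia); ring.
Qed.

Lemma adj_lip b l lab lam :
  (1 <= l)%N ->
  (forall k, (k < l)%N -> Z.abs (lam k) <= Z.of_nat (sz b)) ->
  forall a c, adjG b l lab a c -> Z.abs (Phi b l lam a - Phi b l lam c) <= 1.
Proof.
move=> Hl Hlam a c [H|H]; have := @Phi_lip b l lab lam _ _ Hl Hlam H; lia.
Qed.

Lemma lam_ok b l (j j' : seq nat) :
  valid_idx b l j -> valid_idx b l j' ->
  forall k, (k < l)%N -> Z.abs (nZ j k - nZ j' k) <= Z.of_nat (sz b).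
Proof.
move=> [_ H1] [_ H2] k Hk. have := H1 k Hk. have := H2 k Hk. rewrite /nZ. lia.
Qed.

Lemma LB b l lab ok x z n :
  (1 <= l)%N -> valid_idx b l x -> valid_idx b l z ->
  walk (adjG b l lab) ok n (VMain 0 x) (VMain (2 * l) z) ->
  exists j, valid_idx b l j /\ ok (VMain l j) /\
    2 * Z.of_nat l * Z.of_nat (Aw b l) + Cost l x z j <= Z.of_nat n.
Proof.
move=> Hl Hx Hz W.
have Hs0 : side l (VMain 0 x) = 0%N by rewrite /= ifT //.
have Hs2 : side l (VMain (2 * l) z) = 2%N by rewrite /= ifF ?ifF //; lia.
have [j [n1 [n2 [Hj [Hn [W1 W2]]]]]] := @walk_split b l lab ok n _ _ W Hs0 Hs2.
exists j; split => //; split; first exact: (@walk_ok_l _ _ _ _ _ W2).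
have L1 := @walk_lb _ _ _ _ _ _ (@adj_lip b l lab _ Hl (@lam_ok b l j x Hj Hx)) W1.
have L2 := @walk_lb _ _ _ _ _ _ (@adj_lip b l lab _ Hl (@lam_ok b l z j Hz Hj)) W2.
rewrite /= phi_half1 in L1. rewrite /= phi_half2 in L2.
have -> : Cost l x z j = sumZ l (fun k => 2 * (nZ j k - nZ x k) * (nZ j k - nZ x k) - (nZ j k - nZ x k) ^ 2)
   + sumZ l (fun k => 2 * (nZ z k - nZ j k) * (nZ z k - nZ j k) - (nZ z k - nZ j k) ^ 2).
  rewrite sumZ_add /Cost. apply: sumZ_ext => k _. ring.
rewrite -Hn. lia.
Qed.

Lemma mid_nth l x z k : (k < l)%N ->
  nth 0%N (midpoint l x z) k = ((nth 0%N x k + nth 0%N z k)./2)%N.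
Proof. move=> Hk. by rewrite /midpoint nth_mkseq. Qed.

Lemma size_mid l x z : size (midpoint l x z) = l.
Proof. by rewrite /midpoint size_mkseq. Qed.

Lemma cost_min b l x z j :
  (forall k, (k < l)%N -> odd (nth 0%N x k) = odd (nth 0%N z k)) ->
  valid_idx b l j ->
  Cost l x z (midpoint l x z) <= Cost l x z j /\
  (j <> midpoint l x z -> Cost l x z (midpoint l x z) + 1 <= Cost l x z j).
Proof.
move=> Hodd [Hsj Hj].
set m := midpoint l x z.
have Hm : forall k, (k < l)%N -> 2 * nZ m k = nZ x k + nZ z k.
  move=> k Hk. rewrite /nZ /m mid_nth //. have := Hodd k Hk. lia.
have D : Cost l x z j - Cost l x z m = sumZ l (fun k => 2 * ((nZ j k - nZ m k) * (nZ j k - nZ m k))).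
  rewrite /Cost sumZ_sub. apply: sumZ_ext => k Hk. have := Hm k Hk. nia.
have Hnn : forall k, (k < l)%N -> 0 <= 2 * ((nZ j k - nZ m k) * (nZ j k - nZ m k)).
  move=> k _. have := Z.square_nonneg (nZ j k - nZ m k). lia.
have := @sumZ_nonneg _ _ Hnn.
split; first lia.
move=> Hne.
have [k [Hk Hjk]] : exists k, (k < l)%N /\ nth 0%N j k <> nth 0%N m k.
  apply: NNPP => Hc. apply: Hne. apply: (@eq_from_nth _ 0%N).
  - by rewrite Hsj size_mid.
  - move=> k Hk. rewrite Hsj in Hk. apply: NNPP => Hn. apply: Hc. by exists k.
have := @sumZ_ge _ _ k Hnn Hk.
have : nZ j k <> nZ m k by rewrite /nZ; lia.
move=> Hneq. have : 1 <= (nZ j k - nZ m k) * (nZ j k - nZ m k) by nia.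
lia.
Qed.

Lemma walk_rev (adj : vtx -> vtx -> Prop) ok n u v :
  (forall a c, adj a c -> adj c a) -> walk adj ok n u v -> walk adj ok n v u.
Proof.
move=> Hs; elim => [a Ha | m a w c Ha Haw Hw IH]; first exact: walk0.
have -> : m.+1 = (m + 1)%N by lia.
apply: walk_cat IH _. apply: walkS (@walk_ok_l _ _ _ _ _ Hw) (Hs _ _ Haw) _. exact: walk0.
Qed.

Lemma adjG_sym b l lab a c : adjG b l lab a c -> adjG b l lab c a.
Proof. by case; [right|left]. Qed.

Lemma walk1 (adj : vtx -> vtx -> Prop) (ok : vtx -> Prop) u v :
  ok u -> ok v -> adj u v -> walk adj ok 1 u v.
Proof. move=> Hu Hv H. apply: walkS Hu H _. exact: walk0. Qed.

Lemma kept_tree l R i j o d p : kept l R (VTree i j o d p).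
Proof. by move=> [j' [E _]]. Qed.

Lemma kept_path l R i j t q : kept l R (VPath i j t q).
Proof. by move=> [j' [E _]]. Qed.

Lemma kept_pathpt b l lab R i j t q : kept l R (pathpt b l lab i j t q).
Proof.
rewrite /pathpt. case: ifP => _; first exact: kept_tree.
case: ifP => _; [exact: kept_tree | exact: kept_path].
Qed.

Lemma tree_up b l lab R i j (o : bool) d p :
  valid_idx b l j -> (if o then (i < 2 * l)%N else (0 < i)%N && (i <= 2 * l)%N) ->
  (d <= b)%N -> (p < 2 ^ d)%N ->
  walk (adjG b l lab) (kept l R) d (VTree i j o d p) (VTree i j o 0 0).
Proof.
move=> Hj Ho. elim: d p => [|d IH] p Hd Hp.
- have -> : p = 0%N by rewrite expn0 in Hp; lia.
  apply: walk0; exact: kept_tree.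
- have Hp2 : (p %/ 2 < 2 ^ d)%N by rewrite expnS in Hp; lia.
  apply: walkS (kept_tree _ _ _ _ _ _ _) _ (IH _ ltac:(lia) Hp2).
  right.
  have E : p = (2 * (p %/ 2) + p %% 2)%N by lia.
  rewrite {2}E. apply: arc_tree => //; lia.
Qed.

Lemma tree_down b l lab R i j (o : bool) d p :
  valid_idx b l j -> (if o then (i < 2 * l)%N else (0 < i)%N && (i <= 2 * l)%N) ->
  (d <= b)%N -> (p < 2 ^ d)%N ->
  walk (adjG b l lab) (kept l R) d (VTree i j o 0 0) (VTree i j o d p).
Proof.
move=> *; apply: walk_rev; first exact: adjG_sym. exact: tree_up.
Qed.

Lemma path_walk b l lab R i j t q :
  (i < 2 * l)%N -> valid_idx b l j -> (t < sz b)%N -> (q <= plen b l i j t)%N ->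
  walk (adjG b l lab) (kept l R) q (pathpt b l lab i j t 0) (pathpt b l lab i j t q).
Proof.
move=> Hi Hj Ht. elim: q => [|q IH] Hq; first by apply: walk0; exact: kept_pathpt.
have W1 : walk (adjG b l lab) (kept l R) 1 (pathpt b l lab i j t q) (pathpt b l lab i j t q.+1).
  apply: walk1; try exact: kept_pathpt.
  left. apply: arc_path => //.
have := @walk_cat _ _ _ _ _ _ _ (IH (ltnW Hq)) W1. by rewrite addn1.
Qed.

Lemma Aw_big b l : (1 <= l)%N -> (2 * b + 3 <= Aw b l)%N.
Proof.
move=> Hl. have := pow2_ge b. rewrite /Aw /sz expnS expn1. nia.
Qed.

Lemma valid_set b l j i t : (i < 2 * l)%N -> valid_idx b l j -> (t < sz b)%N ->
  valid_idx b l (set_nth 0%N j (cc l i) t).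
Proof.
move=> Hi [Hs Hj] Ht. have Hc := cc_lt l i Hi. split.
- rewrite size_set_nth Hs. lia.
- move=> k Hk. rewrite nth_set_nth /=. case: ifP => _ //. exact: Hj.
Qed.

Lemma edge_walk b l lab R i j t :
  (1 <= l)%N -> good_lab b lab ->
  (i < 2 * l)%N -> valid_idx b l j -> (t < sz b)%N ->
  kept l R (VMain i j) -> kept l R (VMain i.+1 (set_nth 0%N j (cc l i) t)) ->
  walk (adjG b l lab) (kept l R) (wt b l i j t) (VMain i j) (VMain i.+1 (set_nth 0%N j (cc l i) t)).
Proof.
move=> Hl Hlab Hi Hj Ht K1 K2.
set j' := set_nth 0%N j (cc l i) t.
have Hj' : valid_idx b l j' by exact: valid_set.
have Hc := cc_lt l i Hi.
have Hu : (nth 0%N j (cc l i) < sz b)%N by case: Hj => _ H; exact: H.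
have [L1 _] := Hlab true i j t t Ht Ht.
have [L2 _] := Hlab false i.+1 j' (nth 0%N j (cc l i)) (nth 0%N j (cc l i)) Hu Hu.
have HA := @Aw_big b l Hl.
have HP : (plen b l i j t + 2 * b + 2)%N = wt b l i j t by rewrite /plen /wt; lia.
have HP0 : (plen b l i j t != 0)%N by rewrite /plen /wt; lia.
have W1 : walk (adjG b l lab) (kept l R) 1 (VMain i j) (VTree i j true 0 0).
  apply: walk1 => //; first exact: kept_tree. left; exact: arc_root_out.
have W2 : walk (adjG b l lab) (kept l R) b (VTree i j true 0 0) (pathpt b l lab i j t 0).
  rewrite /pathpt eqxx. apply: tree_down => //.
have W3 := @path_walk b l lab R i j t (plen b l i j t) Hi Hj Ht (leqnn _).
have W4 : walk (adjG b l lab) (kept l R) b (pathpt b l lab i j t (plen b l i j t))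
            (VTree i.+1 j' false 0 0).
  rewrite /pathpt eqxx (negbTE HP0). apply: tree_up => //; lia.
have W5 : walk (adjG b l lab) (kept l R) 1 (VTree i.+1 j' false 0 0) (VMain i.+1 j').
  apply: walk1 => //; first exact: kept_tree. right; apply: arc_root_in => //; lia.
have := @walk_cat _ _ _ _ _ _ _ (@walk_cat _ _ _ _ _ _ _ (@walk_cat _ _ _ _ _ _ _ (@walk_cat _ _ _ _ _ _ _ W1 W2) W3) W4) W5.
rewrite -HP. have -> : (1 + b + plen b l i j t + b + 1 = plen b l i j t + 2 * b + 2)%N by lia.
done.
Qed.

Definition mix1 (l : nat) (x m : seq nat) (i : nat) : seq nat :=
  mkseq (fun k => if (k < i)%N then nth 0%N m k else nth 0%N x k) l.

Definition mix2 (l : nat) (m z : seq nat) (r : nat) : seq nat :=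
  mkseq (fun k => if (l - r <= k)%N then nth 0%N z k else nth 0%N m k) l.

Lemma mid_lt b l x z : valid_idx b l x -> valid_idx b l z ->
  forall k, (k < l)%N -> (nth 0%N (midpoint l x z) k < sz b)%N.
Proof. move=> [_ Hx] [_ Hz] k Hk. rewrite mid_nth //. have := Hx k Hk. have := Hz k Hk. lia. Qed.

Lemma valid_mkseq b l f : (forall k, (k < l)%N -> (f k < sz b)%N) -> valid_idx b l (mkseq f l).
Proof. move=> H. split; first by rewrite size_mkseq. move=> k Hk. rewrite nth_mkseq //. exact: H. Qed.

Lemma wt_Z b l i j t :
  Z.of_nat (wt b l i j t) = Z.of_nat (Aw b l) +
     (Z.of_nat t - Z.of_nat (nth 0%N j (cc l i))) * (Z.of_nat t - Z.of_nat (nth 0%N j (cc l i))).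
Proof. rewrite /wt Nat2Z.inj_add sq_nat. done. Qed.

Lemma sumZ_S n f : sumZ n.+1 f = sumZ n f + f n.
Proof. by []. Qed.

Lemma first_half b l lab R x z :
  (1 <= l)%N -> good_lab b lab -> valid_idx b l x -> valid_idx b l z ->
  ~ R (midpoint l x z) ->
  forall i, (i <= l)%N -> exists n,
    walk (adjG b l lab) (kept l R) n (VMain 0 x) (VMain i (mix1 l x (midpoint l x z) i)) /\
    Z.of_nat n = Z.of_nat i * Z.of_nat (Aw b l) +
      sumZ i (fun k => (nZ (midpoint l x z) k - nZ x k) ^ 2).
Proof.
move=> Hl Hlab Hx Hz HR.
set m := midpoint l x z.
have Hm := @mid_lt b l x z Hx Hz.
have Vmix : forall i, valid_idx b l (mix1 l x m i).
  move=> i; apply: valid_mkseq => k Hk. case: ifP => _; [exact: Hm| by case: Hx => _; apply].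
elim => [|i IH] Hi.
- exists 0%N. split; last by rewrite /=; lia.
  have -> : mix1 l x m 0 = x.
    case: Hx => Hs _. apply: (@eq_from_nth _ 0%N); first by rewrite size_mkseq Hs.
    move=> k Hk. rewrite size_mkseq in Hk. by rewrite nth_mkseq.
  apply: walk0. move=> [j [E _]]. case: E. lia.
- have [n [W Hn]] := IH (ltnW Hi).
  have Hil : (i < 2 * l)%N by lia.
  have Hcc : cc l i = i by rewrite /cc ifT.
  have E : set_nth 0%N (mix1 l x m i) (cc l i) (nth 0%N m i) = mix1 l x m i.+1.
    apply: (@eq_from_nth _ 0%N).
    - by rewrite size_set_nth !size_mkseq Hcc; lia.
    - move=> k Hk. rewrite size_set_nth size_mkseq Hcc in Hk.
      rewrite nth_set_nth /= !nth_mkseq; try lia. rewrite Hcc.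
      case: eqP => [->|Hki]; first by rewrite ltnSn.
      case: ifP => H1; case: ifP => H2 //; lia.
  have K1 : kept l R (VMain i (mix1 l x m i)) by move=> [j [[E1 _] _]]; lia.
  have K2 : kept l R (VMain i.+1 (mix1 l x m i.+1)).
    move=> [j [[E1 E2] Rj]]. apply: HR.
    have : mix1 l x m i.+1 = m.
      apply: (@eq_from_nth _ 0%N); first by rewrite size_mkseq size_mid.
      move=> k Hk. rewrite size_mkseq in Hk. rewrite nth_mkseq // ifT //; lia.
    move=> Em. rewrite -/m -Em E2. done.
  have Ht : (nth 0%N m i < sz b)%N by apply: Hm; lia.
  have W2 := @edge_walk b l lab R i (mix1 l x m i) (nth 0%N m i) Hl Hlab Hil (Vmix i) Ht K1.
  rewrite E in W2. have W3 := W2 K2.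
  exists (n + wt b l i (mix1 l x m i) (nth 0%N m i))%N. split.
  + exact: (@walk_cat _ _ _ _ _ _ _ W W3).
  + rewrite Nat2Z.inj_add Hn wt_Z Hcc sumZ_S Nat2Z.inj_succ.
    have -> : nth 0%N (mix1 l x m i) i = nth 0%N x i by rewrite /mix1 nth_mkseq // ltnn.
    rewrite /nZ. ring.
Qed.

Lemma second_half b l lab R x z :
  (1 <= l)%N -> good_lab b lab -> valid_idx b l x -> valid_idx b l z ->
  ~ R (midpoint l x z) ->
  forall r, (r <= l)%N -> exists n,
    walk (adjG b l lab) (kept l R) n (VMain l (midpoint l x z))
         (VMain (l + r) (mix2 l (midpoint l x z) z r)) /\
    Z.of_nat n = Z.of_nat r * Z.of_nat (Aw b l) +
      (sumZ l (fun k => (nZ z k - nZ (midpoint l x z) k) ^ 2)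
       - sumZ (l - r) (fun k => (nZ z k - nZ (midpoint l x z) k) ^ 2)).
Proof.
move=> Hl Hlab Hx Hz HR.
set m := midpoint l x z.
have Hm := @mid_lt b l x z Hx Hz.
have Vmix : forall r, valid_idx b l (mix2 l m z r).
  move=> r; apply: valid_mkseq => k Hk. case: ifP => _; [by case: Hz => _; apply| exact: Hm].
elim => [|r IH] Hr.
- exists 0%N. split; last by rewrite subn0; lia.
  have -> : mix2 l m z 0 = m.
    apply: (@eq_from_nth _ 0%N); first by rewrite size_mkseq size_mid.
    move=> k Hk. rewrite size_mkseq in Hk. rewrite nth_mkseq // ifF //; lia.
  rewrite addn0. apply: walk0. move=> [j [[E] Rj]]. apply: HR. by rewrite -/m E.
- have [n [W Hn]] := IH (ltnW Hr).
  have Hil : (l + r < 2 * l)%N by lia.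
  set c := (l - r.+1)%N.
  have Hcc : cc l (l + r) = c by rewrite /cc ifF; lia.
  have E : set_nth 0%N (mix2 l m z r) (cc l (l + r)) (nth 0%N z c) = mix2 l m z r.+1.
    apply: (@eq_from_nth _ 0%N).
    - by rewrite size_set_nth !size_mkseq Hcc; lia.
    - move=> k Hk. rewrite size_set_nth size_mkseq Hcc in Hk.
      rewrite nth_set_nth /= !nth_mkseq; try lia. rewrite Hcc.
      case: eqP => [->|Hki]; first by rewrite ifT //; lia.
      case: ifP => H1; case: ifP => H2 //; lia.
  have K1 : kept l R (VMain (l + r) (mix2 l m z r)).
    move=> [j [[E1 E2] Rj]]. have Er : r = 0%N by lia. subst r. apply: HR.
    rewrite -/m. have : mix2 l m z 0 = m.
      apply: (@eq_from_nth _ 0%N); first by rewrite size_mkseq size_mid.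
      move=> k Hk. rewrite size_mkseq in Hk. rewrite nth_mkseq // ifF //; lia.
    move=> Em. by rewrite -Em E2.
  have K2 : kept l R (VMain (l + r).+1 (mix2 l m z r.+1)) by move=> [j [[E1 _] _]]; lia.
  have Ht : (nth 0%N z c < sz b)%N by case: Hz => _; apply; lia.
  have W2 := @edge_walk b l lab R (l + r) (mix2 l m z r) (nth 0%N z c) Hl Hlab Hil (Vmix r) Ht K1.
  rewrite E in W2. have W3 := W2 K2.
  exists (n + wt b l (l + r) (mix2 l m z r) (nth 0%N z c))%N. split.
  + rewrite addnS. exact: (@walk_cat _ _ _ _ _ _ _ W W3).
  + rewrite Nat2Z.inj_add Hn wt_Z Hcc Nat2Z.inj_succ.
    have -> : nth 0%N (mix2 l m z r) c = nth 0%N m c by rewrite /mix2 nth_mkseq ?ifF //; lia.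
    have -> : (l - r = c.+1)%N by rewrite /c; lia.
    rewrite sumZ_S /nZ. ring.
Qed.

Lemma UB b l lab R x z :
  (1 <= l)%N -> good_lab b lab -> valid_idx b l x -> valid_idx b l z ->
  ~ R (midpoint l x z) ->
  exists n, walk (adjG b l lab) (kept l R) n (VMain 0 x) (VMain (2 * l) z) /\
    Z.of_nat n = 2 * Z.of_nat l * Z.of_nat (Aw b l) + Cost l x z (midpoint l x z).
Proof.
move=> Hl Hlab Hx Hz HR.
have [n1 [W1 H1]] := @first_half b l lab R x z Hl Hlab Hx Hz HR l (leqnn l).
have [n2 [W2 H2]] := @second_half b l lab R x z Hl Hlab Hx Hz HR l (leqnn l).
have E1 : mix1 l x (midpoint l x z) l = midpoint l x z.
  apply: (@eq_from_nth _ 0%N); first by rewrite size_mkseq size_mid.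
  move=> k Hk. rewrite size_mkseq in Hk. by rewrite nth_mkseq // ifT.
have E2 : mix2 l (midpoint l x z) z l = z.
  case: Hz => Hs _.
  apply: (@eq_from_nth _ 0%N); first by rewrite size_mkseq Hs.
  move=> k Hk. rewrite size_mkseq in Hk. rewrite nth_mkseq // ifT //; lia.
rewrite E1 in W1. rewrite E2 addnn -mul2n in W2.
exists (n1 + n2)%N. split; first exact: (@walk_cat _ _ _ _ _ _ _ W1 W2).
have C : Cost l x z (midpoint l x z) =
  sumZ l (fun k => (nZ (midpoint l x z) k - nZ x k) ^ 2) +
  sumZ l (fun k => (nZ z k - nZ (midpoint l x z) k) ^ 2) by rewrite sumZ_add.
rewrite Nat2Z.inj_add H1 H2 subnn C. cbn [sumZ]. lia.
Qed.
Close Scope Z_scope.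

Theorem mainTheorem7 (b l : nat) (lab : labelling) (R : seq nat -> Prop)
    (x z : seq nat) :
  1 <= b -> 1 <= l -> good_lab b lab ->
  valid_idx b l x -> valid_idx b l z ->
  (forall k, k < l -> odd (nth 0 x k) = odd (nth 0 z k)) ->
  (~ R (midpoint l x z) <->
   exists d : option nat,
     is_dist (adjG b l lab) (kept l R) (VMain 0 x) (VMain (2 * l) z) d /\
     is_dist (adjG b l lab) (fun _ => True) (VMain 0 x) (VMain (2 * l) z) d).
Proof.
move=> Hb Hl Hlab Hx Hz Hodd.
have LBall : forall ok n, walk (adjG b l lab) ok n (VMain 0 x) (VMain (2 * l) z) ->
    exists j, ok (VMain l j) /\
    (2 * Z.of_nat l * Z.of_nat (Aw b l) + Cost l x z (midpoint l x z) <= Z.of_nat n)%Z /\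
    (j <> midpoint l x z ->
     (2 * Z.of_nat l * Z.of_nat (Aw b l) + Cost l x z (midpoint l x z) + 1 <= Z.of_nat n)%Z).
  move=> ok n W.
  have [j [Hj [Hok Hn]]] := @LB b l lab ok x z n Hl Hx Hz W.
  have [C1 C2] := @cost_min b l x z j Hodd Hj.
  exists j; split => //; split; first lia.
  move=> Hne. have := C2 Hne. lia.
have [n0 [W0 H0]] := @UB b l lab (fun _ => False) x z Hl Hlab Hx Hz (fun f => f).
have W0' := @walk_mono _ _ (fun _ => True) _ _ _ (fun _ _ => I) W0.
split.
- move=> HR.
  have [n1 [W1 H1]] := @UB b l lab R x z Hl Hlab Hx Hz HR.
  exists (Some n1). split.
  + split => // k Hk Wk. have [j [_ [L _]]] := LBall _ _ Wk. lia.
  + split; first exact: (@walk_mono _ _ (fun _ => True) _ _ _ (fun _ _ => I) W1).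
    move=> k Hk Wk. have [j [_ [L _]]] := LBall _ _ Wk. lia.
- move=> [[n|] [D1 D2]] HR.
  + case: D1 => W1 _. case: D2 => _ Hmin.
    have [j [Kj [_ L]]] := LBall _ _ W1.
    have Hne : j <> midpoint l x z.
      move=> E. apply: Kj. exists j. by rewrite E.
    have := L Hne. move=> L'.
    apply: (Hmin n0) => //. lia.
  + exact: (D2 n0 W0').
Qed.
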